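(* For every temporal oriented tree $\mathcal T$, the connectivity graph $G$ of $\mathcal T$ contains no anti-hole, i.e., no induced subgraph isomorphic to the complement of a cycle of length at least $5$.
   Context: A temporal digraph is a pair $(D,\lambda)$ with $D=(V,A)$ a finite digraph and $\lambda:A\to 2^{\{1,\dots,t_{\max}\}}$ giving the time-steps at which each arc is active. A temporal oriented tree $\mathcal T=(T,\lambda)$ is one whose underlying digraph $T$ is an orientation of a tree. A temporal path is a sequence $(v_1,v_2,t_1),\dots,(v_{k-1},v_k,t_{k-1})$ with pairwise distinct $v_i$, $\overrightarrow{v_iv_{i+1}}\in A$, $t_i\in\lambda(\overrightarrow{v_iv_{i+1}})$ and $t_1<\dots<t_{k-1}$. Two vertices $u\ne v$ are temporally connected if there is a temporal path from $u$ to $v$ or from $v$ to $u$. The connectivity graph of $\mathcal T$ is the undirected graph $G$ with $V(G)=V(T)$ and $uv\in E(G)$ iff $u\neq v$ and $u,v$ are temporally connected. *)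

(* Defs.v *)
From mathcomp Require Import all_boot.
Set Implicit Arguments. Unset Strict Implicit. Unset Printing Implicit Defensive.

(* A digraph on a finite vertex type V is given by its arc relation A.
   Time labels: lam u v t means t is in lambda(arc uv). *)

Definition und_adj (V : finType) (A : rel V) : rel V := fun u v => A u v || A v u.

Definition oriented_tree (V : finType) (A : rel V) : Prop :=
  [/\ (forall u, ~~ A u u),
      (forall u v, A u v -> ~~ A v u),
      0 < #|V|,
      (forall u v, connect (und_adj A) u v)
    & (forall c : seq V, uniq c -> 2 < size c -> ~~ cycle (und_adj A) c)].

Definition temporal_labelling (V : finType) (tmax : nat) (lam : V -> V -> nat -> bool) : Prop :=
  forall u v t, lam u v t -> (1 <= t <= tmax).

(* A temporal path from u to v: vertices u = v_1, v_2 = vs_0, ..., v_k = last,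
   pairwise distinct, each (v_i, v_{i+1}) an arc active at time t_i,
   with t_1 < ... < t_{k-1}. *)
Definition temporal_path (V : finType) (A : rel V) (lam : V -> V -> nat -> bool)
    (u v : V) : Prop :=
  exists (vs : seq V) (ts : seq nat),
    [/\ size ts = size vs,
        uniq (u :: vs),
        last u vs = v,
        sorted ltn ts
      & forall i, i < size vs ->
          A (nth u (u :: vs) i) (nth u vs i) &&
          lam (nth u (u :: vs) i) (nth u vs i) (nth 0 ts i)].

Definition conn_edge (V : finType) (A : rel V) (lam : V -> V -> nat -> bool)
    (u v : V) : Prop :=
  u != v /\ (temporal_path A lam u v \/ temporal_path A lam v u).

Definition cycle_adj (k : nat) (i j : 'I_k) : bool :=
  (j == (i.+1 %% k) :> nat) || (i == (j.+1 %% k) :> nat).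

Definition has_induced_anticycle (V : finType) (E : V -> V -> Prop) (k : nat) : Prop :=
  exists f : 'I_k -> V, injective f /\
    forall i j : 'I_k, i != j -> (E (f i) (f j) <-> ~~ cycle_adj i j).

(* Main.v *)
Require Import Defs.
From mathcomp Require Import all_boot.
From mathcomp Require Import zify.
Set Implicit Arguments. Unset Strict Implicit. Unset Printing Implicit Defensive.

Section Aux.
Variables (V : finType) (A : rel V) (lam : V -> V -> nat -> bool).

Definition ey (y : V) : rel V := fun u v => [&& und_adj A u v, u != y & v != y].

Lemma ey_sym y : symmetric (ey y).
Proof. by move=> u v; rewrite /ey /und_adj; case: (A u v); case: (A v u); case: (u != y); case: (v != y). Qed.

Lemma ey_csym y u v : connect (ey y) u v = connect (ey y) v u.
Proof. exact: (sym_connect_sym (ey_sym y)). Qed.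

Definition tpw (a b : V) vs ts := [/\ size ts = size vs, uniq (a :: vs), last a vs = b, sorted ltn ts
  & forall i, i < size vs -> A (nth a (a :: vs) i) (nth a vs i) && lam (nth a (a :: vs) i) (nth a vs i) (nth 0 ts i)].

Lemma last_take_nth (a : V) vs p : p < size vs -> last a (take p.+1 vs) = nth a vs p.
Proof.
move=> hp; rewrite (last_nth a) size_take.
have -> : (if p.+1 < size vs then p.+1 else size vs) = p.+1 :> nat.
  by case: ifP => //; lia.
by rewrite /= nth_take.
Qed.

Lemma tpw_pre a b vs ts p : tpw a b vs ts -> p < size vs ->
  tpw a (nth a vs p) (take p.+1 vs) (take p.+1 ts).
Proof.
case=> hs hu hl hso hn hp; split.
- by rewrite !size_take hs.
- by move: (take_uniq p.+2 hu).
- exact: last_take_nth.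
- apply: (subseq_sorted _ (take_subseq _ _) hso); exact: ltn_trans.
move=> i hi.
have hi' : i < p.+1 by move: hi; rewrite size_take; case: ifP; lia.
have -> : a :: take p.+1 vs = take p.+2 (a :: vs) by [].
rewrite !nth_take //; last by lia.
apply: hn; move: hi; rewrite size_take; case: ifP; lia.
Qed.

Lemma tpw_suf a b vs ts p : tpw a b vs ts -> p < size vs ->
  tpw (nth a vs p) b (drop p.+1 vs) (drop p.+1 ts).
Proof.
case=> hs hu hl hso hn hp; split.
- by rewrite !size_drop hs.
- rewrite -drop_nth //; apply: drop_uniq; by case/andP: hu.
- by rewrite -(last_take_nth a hp) -last_cat cat_take_drop.
- apply: (subseq_sorted _ (drop_subseq _ _) hso); exact: ltn_trans.
move=> i hi; rewrite size_drop in hi.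
rewrite -drop_nth // !nth_drop.
have := hn (p.+1 + i) ltac:(lia).
rewrite addSn /= -addSn.
rewrite (set_nth_default a (nth a vs p) (n:=p+i)); last by lia.
by rewrite (set_nth_default a (nth a vs p) (n:=p.+1+i)); last by lia.
Qed.

Lemma tp_path a b : temporal_path A lam a b ->
  exists vs, [/\ path A a vs, uniq (a :: vs) & last a vs = b].
Proof.
case=> vs [ts [hs hu hl hso hn]]; exists vs; split=> //.
by apply/(pathP a) => i hi; case/andP: (hn i hi).
Qed.

Lemma path_ey y x s : path A x s -> y \notin x :: s -> path (ey y) x s.
Proof.
elim: s x => //= z s IH x /andP[hxz hp].
rewrite !inE !negb_or => /andP[hx /andP[hz hs]].
rewrite /ey /und_adj hxz /= eq_sym hx eq_sym hz /=.
apply: IH => //; by rewrite inE negb_or hz.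
Qed.

Lemma ey_notin y x s : path (ey y) x s -> y \notin s.
Proof.
elim: s x => //= z s IH x /andP[/and3P[_ _ hz] hp].
by rewrite inE negb_or eq_sym hz (IH z).
Qed.

Lemma tp_mid a b y : temporal_path A lam a b -> y != a -> ~~ connect (ey y) a b ->
  temporal_path A lam a y /\ temporal_path A lam y b.
Proof.
case=> vs [ts htp] hya hc.
have htp' : tpw a b vs ts by [].
case: (boolP (y \in vs)) => hy.
  have hp : index y vs < size vs by rewrite index_mem.
  have hny : nth a vs (index y vs) = y by rewrite nth_index.
  split.
    exists (take (index y vs).+1 vs), (take (index y vs).+1 ts).
    by have := tpw_pre htp' hp; rewrite hny.
  exists (drop (index y vs).+1 vs), (drop (index y vs).+1 ts).
  by have := tpw_suf htp' hp; rewrite hny.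
case: htp => hs hu hl hso hn.
exfalso; move/negP: hc; apply; apply/connectP; exists vs => //.
apply: path_ey; last by rewrite inE negb_or hya.
by apply/(pathP a) => i hi; case/andP: (hn i hi).
Qed.

Hypothesis antisym : forall u v, A u v -> ~~ A v u.
Hypothesis acyc : forall c : seq V, uniq c -> 2 < size c -> ~~ cycle (und_adj A) c.

Lemma no_pass x y z : temporal_path A lam x y -> temporal_path A lam y z ->
  x != y -> y != z -> ~~ connect (ey y) x z.
Proof.
move=> /tp_path [vs1 [hp1 hu1 hl1]] /tp_path [vs2 [hp2 hu2 hl2]] hxy hyz.
apply/negP => hxz.
case/lastP: vs1 hp1 hu1 hl1 => [/= _ _ hl1|s1 y'].
  by rewrite hl1 eqxx in hxy.
rewrite last_rcons => hp1 hu1 hl1; subst y'.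
move: hp1; rewrite rcons_path => /andP[hp1 hAp].
move: hu1; rewrite -rcons_cons rcons_uniq => /andP[hyn _].
set p := last x s1 in hAp.
case: vs2 hp2 hu2 hl2 => [/= _ _ hl2|q s2]; first by rewrite hl2 eqxx in hyz.
move=> /= /andP[hAq hp2] /andP[hyn2 _] hl2.
have hcx : connect (ey y) x p by apply/connectP; exists s1 => //; apply: path_ey.
have hcq : connect (ey y) q z by apply/connectP; exists s2 => //; apply: path_ey.
have hpq : connect (ey y) p q.
  have hpx : connect (ey y) p x by rewrite ey_csym.
  have hzq : connect (ey y) z q by rewrite ey_csym.
  exact: connect_trans hpx (connect_trans hxz hzq).
have hpy : p != y.
  by apply/negP => /eqP hpy; move: hyn; rewrite -hpy mem_last.
have hqy : q != y.
  by apply/negP => /eqP hqy; move: hyn2; rewrite hqy inE eqxx.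
have hneq : p != q.
  by apply/negP => /eqP hpq'; move: (antisym hAp); rewrite hpq' hAq.
case/connectP: hpq => s hs hls.
case/shortenP: hs hls => s' hs' hus' _ hls'.
have hys' := ey_notin hs'.
have hu : uniq (y :: p :: s') by rewrite /= inE negb_or eq_sym hpy hys'.
have hsz : 2 < size (y :: p :: s').
  by case: s' hls' {hs' hus' hys' hu} => [/= hq|]; [rewrite hq eqxx in hneq|].
have hc : cycle (und_adj A) (y :: p :: s').
  rewrite /= rcons_path -hls' /und_adj hAp orbT /=.
  rewrite hAq orbT andbT.
  apply: sub_path hs' => u v /and3P[]; done.
by move: (acyc hu hsz); rewrite hc.
Qed.


Lemma F1c a b y : conn_edge A lam a b -> y != a -> y != b -> ~~ connect (ey y) a b ->
  conn_edge A lam a y.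
Proof.
case=> hab [h|h] hya hyb hc.
  by split; [rewrite eq_sym|left; case: (tp_mid h hya hc)].
rewrite ey_csym in hc.
by split; [rewrite eq_sym|right; case: (tp_mid h hyb hc)].
Qed.

Lemma sep_contra X Z Y U W :
  conn_edge A lam U Z -> conn_edge A lam W X -> conn_edge A lam U W ->
  ~ conn_edge A lam U Y -> ~ conn_edge A lam W Y ->
  Y != U -> Y != W -> Y != X -> Y != Z ->
  ~~ connect (ey Y) X Z -> False.
Proof.
move=> hUZ hWX hUW nUY nWY hYU hYW hYX hYZ /negP; apply.
have cUZ : connect (ey Y) U Z.
  by case: (boolP (connect (ey Y) U Z)) => // h; case: nUY; apply: F1c hUZ _ _ h.
have cWX : connect (ey Y) W X.
  by case: (boolP (connect (ey Y) W X)) => // h; case: nWY; apply: F1c hWX _ _ h.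
have cUW : connect (ey Y) U W.
  by case: (boolP (connect (ey Y) U W)) => // h; case: nUY; apply: F1c hUW _ _ h.
rewrite ey_csym in cWX; rewrite ey_csym in cUW.
exact: connect_trans cWX (connect_trans cUW cUZ).
Qed.

Lemma excl X Y : X != Y -> temporal_path A lam X Y -> temporal_path A lam Y X -> False.
Proof.
move=> hXY h1 h2; move: (no_pass h1 h2 hXY); rewrite eq_sym => /(_ hXY).
by rewrite connect0.
Qed.

Lemma step X Z Y U W : conn_edge A lam X Y -> conn_edge A lam Z Y ->
  conn_edge A lam U Z -> conn_edge A lam W X -> conn_edge A lam U W ->
  ~ conn_edge A lam U Y -> ~ conn_edge A lam W Y ->
  Y != U -> Y != W -> Y != X -> Y != Z ->
  (temporal_path A lam X Y <-> temporal_path A lam Z Y).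
Proof.
move=> hXY hZY hUZ hWX hUW nUY nWY hYU hYW hYX hYZ; split=> h.
  case: hZY => _ [//|h2].
  exfalso; apply: (sep_contra hUZ hWX hUW nUY nWY hYU hYW hYX hYZ).
  by apply: no_pass h h2 _ _; rewrite // eq_sym.
case: hXY => _ [//|h2].
exfalso; apply: (sep_contra hUZ hWX hUW nUY nWY hYU hYW hYX hYZ).
rewrite ey_csym; by apply: no_pass h h2 _ _; rewrite // eq_sym.
Qed.

End Aux.

Ltac sol := repeat (case: ifP => [?|/negbT ?]); lia.

Theorem mainTheorem12 (V : finType) (A : rel V) (tmax : nat)
    (lam : V -> V -> nat -> bool) :
  oriented_tree A -> temporal_labelling tmax lam ->
  forall k : nat, 5 <= k ->
    ~ has_induced_anticycle (conn_edge A lam) k.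
Proof.
move=> [_ anti _ _ acyc] _ k hk [f [finj hf]].
case: k hk f finj hf => [//|k] hk f finj hf.
pose x n := f (inord n : 'I_k.+1).
pose nx n := if n.+1 < k.+1 then n.+1 else 0.
have hmod : forall a, a < k.+1 -> a.+1 %% k.+1 = nx a.
  move=> a ha; rewrite /nx; case: ltnP => h; first by rewrite modn_small.
  have -> : a.+1 = k.+1 by lia.
  by rewrite modnn.
have xneq : forall a b, a < k.+1 -> b < k.+1 -> a != b -> x a != x b.
  move=> a b ha hb hab; apply/negP => /eqP /finj /(congr1 (@nat_of_ord _)).
  by rewrite !inordK // => /eqP; rewrite (negbTE hab).
have hE : forall a b, a < k.+1 -> b < k.+1 -> a != b ->
   (conn_edge A lam (x a) (x b) <-> ~~ ((b == nx a) || (a == nx b))).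
  move=> a b ha hb hab.
  have hne : (inord a : 'I_k.+1) != inord b.
    apply/negP => /eqP /(congr1 (@nat_of_ord _)); rewrite !inordK // => /eqP; by rewrite (negbTE hab).
  by rewrite (hf _ _ hne) /cycle_adj !inordK // !hmod.
have Epos : forall a b, a < k.+1 -> b < k.+1 -> a != b -> b != nx a -> a != nx b ->
    conn_edge A lam (x a) (x b).
  by move=> a b ha hb hab h1 h2; apply/(hE a b ha hb hab); rewrite negb_or h1 h2.
have Eneg : forall a b, a < k.+1 -> b < k.+1 -> a != b -> (b == nx a) || (a == nx b) ->
    ~ conn_edge A lam (x a) (x b).
  by move=> a b ha hb hab h /(hE a b ha hb hab); rewrite h.
pose T a b := temporal_path A lam (x a) (x b).
have stp : forall X Z Y U W, X < k.+1 -> Z < k.+1 -> Y < k.+1 -> U < k.+1 -> W < k.+1 ->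
   X != Y -> Z != Y -> U != Z -> W != X -> U != W -> U != Y -> W != Y ->
   Y != nx X -> X != nx Y -> Y != nx Z -> Z != nx Y ->
   Z != nx U -> U != nx Z -> X != nx W -> W != nx X -> W != nx U -> U != nx W ->
   (Y == nx U) || (U == nx Y) -> (Y == nx W) || (W == nx Y) ->
   (T X Y <-> T Z Y).
  move=> X Z Y U W hX hZ hY hU hW hXY hZY hUZ hWX hUW hUY hWY h1 h2 h3 h4 h5 h6 h7 h8 h9 h10 h11 h12.
  apply: (step anti acyc (U := x U) (W := x W)).
  all: try first [ by apply: xneq => //; rewrite eq_sym | by apply: Epos | by apply: Eneg ].
have ex : forall a b, a < k.+1 -> b < k.+1 -> a != b -> b != nx a -> a != nx b ->
    (T a b <-> ~ T b a).
  move=> a b ha hb hab h1 h2; have := Epos a b ha hb hab h1 h2.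
  have nx2 := excl (lam := lam) anti acyc (xneq a b ha hb hab).
  case=> _ [h|h]; split.
  - by move=> _ h'; apply: nx2 h h'.
  - by [].
  - by move=> h'; case: (nx2 h' h).
  - by move=> h'; case: h'.
have v0 : T 2 0 <-> T 3 0 by apply: (stp 2 3 0 1 k); rewrite /nx; sol.
have v1 : T 3 1 <-> T 4 1 by apply: (stp 3 4 1 2 0); rewrite /nx; sol.
have v3 : T 0 3 <-> T 1 3 by apply: (stp 0 1 3 4 2); rewrite /nx; sol.
have v4 : T 1 4 <-> T 2 4 by apply: (stp 1 2 4 (nx 4) 3); rewrite /nx; sol.
have ind : forall d, 4 + d < k.+1 -> (T 4 2 <-> T (4 + d) 2).
  elim=> [|d IH] hd; first by rewrite addn0.
  rewrite (IH ltac:(lia)) addnS.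
  by apply: (stp (4 + d) (4 + d).+1 2 3 1); rewrite /nx; sol.
have v2 : T 4 2 <-> T 0 2.
  rewrite (ind (k - 4) ltac:(lia)).
  by apply: (stp (4 + (k - 4)) 0 2 3 1); rewrite /nx; sol.
have e02 : T 0 2 <-> ~ T 2 0 by apply: ex; rewrite /nx; sol.
have e24 : T 2 4 <-> ~ T 4 2 by apply: ex; rewrite /nx; sol.
have e41 : T 4 1 <-> ~ T 1 4 by apply: ex; rewrite /nx; sol.
have e13 : T 1 3 <-> ~ T 3 1 by apply: ex; rewrite /nx; sol.
have e30 : T 3 0 <-> ~ T 0 3 by apply: ex; rewrite /nx; sol.
clearbody T; tauto.
Qed.
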